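(* Let $\rho=(\frac12,\ldots,\frac12)\in\mathbb{R}^6$ and let $P_{\rm ext}$ be the convex hull of the vectors $e_j$ and $\rho-2e_j$ ($0\le j\le5$). Inside the affine subspace $\{\alpha\in\mathbb{R}^6:2\rho\cdot\alpha=1\}$, the bounding inequalities of $P_{\rm ext}$ are \[\alpha_r+\alpha_s\le1,\qquad 0\le r<s\le5;\] that is, $P_{\rm ext}$ is the set of $\alpha$ with $\sum_r\alpha_r=1$ satisfying these inequalities, and each is facet-defining.
   Context: $e_0,\ldots,e_5$ is the standard basis of $\mathbb{R}^6$. *)

(* Defs.v *)
From HB Require Import structures.
From mathcomp Require Import all_boot all_order all_algebra.
From mathcomp Require Import reals.
Set Implicit Arguments. Unset Strict Implicit. Unset Printing Implicit Defensive.
Import Order.TTheory GRing.Theory Num.Theory.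
Local Open Scope ring_scope.

Section Defs.
Variable R : realType.

Definition dotv n (a b : 'rV[R]_n) : R := \sum_(i < n) a 0 i * b 0 i.

Definition ev n (j : 'I_n) : 'rV[R]_n := delta_mx 0 j.

Definition rho : 'rV[R]_6 := const_mx (2^-1).

Definition convex_hull n (I : finType) (v : I -> 'rV[R]_n) (x : 'rV[R]_n) : Prop :=
  exists l : I -> R, (forall i, 0 <= l i) /\ \sum_i l i = 1 /\ x = \sum_i l i *: v i.

Definition Pext_gen (s : 'I_6 + 'I_6) : 'rV[R]_6 :=
  match s with inl j => ev j | inr j => rho - 2%:R *: ev j end.

Definition Pext : 'rV[R]_6 -> Prop := convex_hull Pext_gen.

Definition aff_indep n k (p : 'I_k.+1 -> 'rV[R]_n) : bool :=
  row_free (\matrix_(i < k) (p (lift ord0 i) - p ord0)).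

Definition affdim n (S : 'rV[R]_n -> Prop) (d : nat) : Prop :=
  (exists p : 'I_d.+1 -> 'rV[R]_n, (forall i, S (p i)) /\ aff_indep p) /\
  (forall p : 'I_d.+2 -> 'rV[R]_n, (forall i, S (p i)) -> ~~ aff_indep p).

Definition facet_defining n (S : 'rV[R]_n -> Prop) (f : 'rV[R]_n -> R) (b : R) : Prop :=
  (forall x, S x -> f x <= b) /\
  exists d, affdim S d.+1 /\ affdim (fun x => S x /\ f x = b) d.

End Defs.

(* Main.v *)
Require Import Defs.
From HB Require Import structures.
From mathcomp Require Import all_boot all_order all_algebra.
From mathcomp Require Import reals.
From mathcomp Require Import ring lra.
Import Order.TTheory GRing.Theory Num.Theory.
Local Open Scope ring_scope.

Section S.
Variable R : realType.

Lemma ev_entry (i j : 'I_6) : (ev R i) 0 j = (i == j)%:R.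
Proof. by rewrite /ev mxE eqxx /= eq_sym. Qed.

Lemma gen_entry (s : 'I_6 + 'I_6) (j : 'I_6) :
  (Pext_gen R s) 0 j = match s with inl i => (i == j)%:R
                         | inr i => 2^-1 - 2 * (i == j)%:R end.
Proof.
case: s => i /=; [exact: ev_entry|idtac]. idtac.
by rewrite !mxE eqxx eq_sym.
Qed.

Lemma sum_ind {n} (f : 'I_n -> R) (j : 'I_n) : \sum_i f i * (i == j)%:R = f j.
Proof.
rewrite (bigD1 j) //= eqxx mulr1 big1 ?addr0 // => i /negbTE ->; by rewrite mulr0.
Qed.

Lemma comb_entry (l : 'I_6 + 'I_6 -> R) (j : 'I_6) :
  (\sum_s l s *: Pext_gen R s) 0 j =
  l (inl j) + (\sum_i l (inr i)) / 2 - 2 * l (inr j).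
Proof.
rewrite summxE big_sumType /=.
under eq_bigr do rewrite mxE ev_entry.
under [X in _ + X]eq_bigr do rewrite !mxE eqxx /= eq_sym mulr_natl mulrBr.
rewrite sum_ind sumrB.
under [X in _ - X]eq_bigr do rewrite mulrnAr.
rewrite sumrMnl sum_ind -mulr_suml.
by rewrite addrA mulr_natl.
Qed.


Lemma dot_eq (x : 'rV[R]_6) : dotv (2%:R *: rho R) x = \sum_j x 0 j.
Proof.
apply: eq_bigr => i _; rewrite !mxE mulfV ?mul1r //.
by rewrite pnatr_eq0.
Qed.

Lemma sum_lin (c1 c2 c3 : R) (f : 'I_6 -> R) k :
  \sum_i (c1 + c2 * f i + c3 * (i == k)%:R) = c1 *+ 6 + c2 * \sum_i f i + c3.
Proof.
rewrite !big_split /= sumr_const card_ord -mulr_sumr.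
by rewrite (sum_ind (fun _ : 'I_6 => c3)).
Qed.

Lemma two_le_sum (a : 'I_6 -> R) r s : (forall i, 0 <= a i) -> r != s ->
  a r + a s <= \sum_i a i.
Proof.
move=> a0 rs; rewrite (bigD1 r) //= (bigD1 s) 1?eq_sym //= addrA lerDl.
by apply: sumr_ge0 => i _.
Qed.

Lemma Pext_valid (x : 'rV[R]_6) : Pext x ->
  \sum_j x 0 j = 1 /\ forall r s : 'I_6, r != s -> x 0 r + x 0 s <= 1.
Proof.
case=> l [l0 [l1 ->]].
have e j : (\sum_s l s *: Pext_gen R s) 0 j = l (inl j) + (\sum_i l (inr i)) / 2 - 2 * l (inr j) by exact: comb_entry.
move: l1; rewrite big_sumType /= => l1.
split.
  under eq_bigr do rewrite e.
  rewrite sumrB big_split /= sumr_const card_ord -mulr_sumr.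
  rewrite -[in X in _ = X]l1 -mulr_natr; lra.
move=> r s rs; rewrite !e.
have := two_le_sum (fun i => l (inl i)) r s (fun i => l0 _) rs.
have := l0 (inr r); have := l0 (inr s).
lra.
Qed.


Lemma Pext_complete (x : 'rV[R]_6) : \sum_j x 0 j = 1 ->
  (forall r s : 'I_6, r != s -> x 0 r + x 0 s <= 1) -> Pext x.
Proof.
move=> xs xp.
have [/existsP [k xk]|] := boolP [exists k, 2^-1 < x 0 k].
  set m := x 0 k.
  exists (fun s => match s with inl i => (2 * m - 1) * (i == k)%:R
     | inr i => 0 + (- 2^-1) * x 0 i + (1 - m) / 2 + (2 * m - 1) / 2 * (i == k)%:R end).
  have hs : \sum_i (0 + (- 2^-1) * x 0 i + (1 - m) / 2 + (2 * m - 1) / 2 * (i == k)%:R)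
      = 2 - 2 * m.
    rewrite (eq_bigr (fun i => (1 - m) / 2 + (- 2^-1) * x 0 i + (2 * m - 1) / 2 * (i == k)%:R)); last by move=> i _; ring.
    by rewrite sum_lin xs -mulr_natr /m; field.
  split; last split.
  - case=> i.
      apply: mulr_ge0; last by rewrite ler0n.
      move: xk; rewrite -/m; lra.
    have [->|ik] := eqVneq i k.
      rewrite -/m mulr1; lra.
    rewrite mulr0 addr0.
    have := xp i k ik; rewrite -/m; lra.
  - rewrite big_sumType /= hs (sum_ind (fun _ : 'I_6 => 2 * m - 1)); ring.
  - apply/rowP => j; rewrite comb_entry hs.
    have [->|jk] := eqVneq j k; first by rewrite /m; field.
    by field.
rewrite negb_exists => /forallP xle.
exists (fun s => match s with inl i => 0 | inr i => 0 + (- 2^-1) * x 0 i + 4^-1 + 0 * (i == ord0)%:R end).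
have hs : \sum_i (0 + (- 2^-1) * x 0 i + 4^-1 + 0 * (i == ord0)%:R) = 1.
  rewrite (eq_bigr (fun i => 4^-1 + (- 2^-1) * x 0 i + 0 * (i == ord0)%:R)); last by move=> i _; ring.
  by rewrite sum_lin xs -mulr_natr; field.
split; last split.
- case=> i //; have := xle i; rewrite -leNgt; lra.
- by rewrite big_sumType /= hs big1 ?add0r.
- by apply/rowP => j; rewrite comb_entry hs; field.
Qed.


Definition pts {m} (c : 'I_6) (g : 'I_m -> 'I_6) (i : 'I_m.+1) : 'rV[R]_6 :=
  match unlift ord0 i with None => ev R c | Some j => Pext_gen R (inr (g j)) end.

Lemma pts_indep m c (g : 'I_m -> 'I_6) : injective g -> (forall i, g i != c) ->
  aff_indep (pts c g).
Proof.
move=> gi gc; apply: inj_row_free => v /rowP H.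
have E t : \sum_j v 0 j * (2^-1 - 2 * (g j == t)%:R - (c == t)%:R) = 0.
  move: (H t); rewrite !mxE => HH; etransitivity; last exact: HH.
  apply: eq_bigr => j _; rewrite !mxE /pts liftK unlift_none /=. by rewrite (gen_entry (inr (g j))) ev_entry.
have V : \sum_j v 0 j = 0.
  move: (E c); rewrite eqxx.
  under eq_bigr do rewrite (negbTE (gc _)) mulr0 subr0.
  rewrite -mulr_suml => /eqP; rewrite mulf_eq0 => /orP [/eqP //| /eqP].
  rewrite /=; lra.
apply/rowP => i; rewrite mxE.
move: (E (g i)); rewrite [c == _]eq_sym (negbTE (gc i)) /=.
under eq_bigr do rewrite subr0 mulrBr (inj_eq gi) mulrCA.
rewrite sumrB -mulr_suml V mul0r sub0r -mulr_sumr sum_ind => /eqP; rewrite oppr_eq0 mulf_eq0 => /orP [/eqP|/eqP //].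
lra.
Qed.


Lemma gen_in_Pext s : Pext (Pext_gen R s).
Proof.
exists (fun t => (t == s)%:R); split; first by move=> t; rewrite ler0n.
split.
  by rewrite (bigD1 s) //= eqxx big1 ?addr0 // => t /negbTE ->.
rewrite (bigD1 s) //= eqxx scale1r big1 ?addr0 // => t /negbTE ->.
by rewrite scale0r.
Qed.

Lemma not_indep k q (p : 'I_k.+1 -> 'rV[R]_6) (B : 'M[R]_(6, q)) :
  (forall i, p i *m B = p ord0 *m B) -> (6 < \rank B + k)%N -> ~~ aff_indep p.
Proof.
move=> H lt; apply/negP => /eqP rk.
have AB : (\matrix_(i < k) (p (lift ord0 i) - p ord0)) *m B = 0.
  apply/row_matrixP => i; rewrite row_mul rowK row0 mulmxBl H subrr //.
have := mulmx0_rank_max AB; rewrite rk addnC leqNgt.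
by rewrite lt.
Qed.

Lemma sum_entries_mul (x : 'rV[R]_6) :
  x *m const_mx 1 = const_mx (\sum_j x 0 j) :> 'M[R]_(1,1).
Proof.
apply/matrixP => i j; rewrite !mxE; rewrite (ord1 i).
by apply: eq_bigr => l _; rewrite mxE mulr1.
Qed.

Lemma rank_ones : \rank (const_mx 1 : 'M[R]_(6,1)) = 1%N.
Proof.
apply/eqP; rewrite eqn_leq rank_leq_col lt0n mxrank_eq0.
apply/eqP => /matrixP /(_ ord0 ord0); rewrite !mxE => /eqP; by rewrite oner_eq0.
Qed.


Definition Bmat (r s : 'I_6) : 'M[R]_(6,2) :=
  \matrix_(l, j) if j == ord0 then 1 else (l == r)%:R + (l == s)%:R.

Lemma Bmat_mul r s (x : 'rV[R]_6) :
  x *m Bmat r s = \row_(j < 2) if j == ord0 then \sum_l x 0 l else x 0 r + x 0 s.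
Proof.
apply/rowP => j; rewrite !mxE.
have [->|jn] := eqVneq j ord0.
  by apply: eq_bigr => l _; rewrite mxE /= mulr1.
idtac.
under eq_bigr do rewrite mxE (negbTE jn) mulrDr.
by rewrite big_split /= !sum_ind.
Qed.

Lemma rank_Bmat r s t : r != s -> t != r -> t != s -> \rank (Bmat r s) = 2%N.
Proof.
move=> rs tr ts.
apply/eqP; rewrite eqn_leq rank_leq_col /= -mxrank_tr.
have rf : row_free (Bmat r s)^T.
  apply: inj_row_free => v /rowP H.
  have E u : v 0 ord0 + v 0 (lift ord0 ord0) * ((u == r)%:R + (u == s)%:R) = 0.
    move: (H u); rewrite !mxE !big_ord_recl big_ord0 !mxE /= addr0 mulr1 => <-.
    done.
  have := E t; rewrite (negbTE tr) (negbTE ts) addr0 mulr0 addr0 => v0.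
  have := E r; rewrite eqxx (negbTE rs) v0 add0r addr0 mulr1 => v1.
  apply/rowP => j; rewrite mxE; case: (unliftP ord0 j) => [j'|] ->.
    by rewrite (ord1 j').
  done.
by rewrite (eqP rf).
Qed.


Lemma char_Pext (x : 'rV[R]_6) : Pext x <->
     (dotv (2%:R *: rho R) x = 1 /\
      forall r s : 'I_6, (r < s)%N -> x 0 r + x 0 s <= 1).
Proof.
rewrite dot_eq; split.
  move/Pext_valid => [-> H]; split => // r s rs; apply: H.
  by apply/eqP => E; move: rs; rewrite E ltnn.
move=> [xs H]; apply: Pext_complete => // r s rs.
have : (r < s)%N \/ (s < r)%N.
  case: (ltngtP r s) => [h|h|E]; [by left|by right|]; by rewrite (val_inj E) eqxx in rs.
by case=> [/H //|/H]; rewrite addrC.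
Qed.

Lemma facet (r s : 'I_6) : (r < s)%N -> facet_defining (@Pext R) (fun x => x 0 r + x 0 s) 1.
Proof.
move=> rs.
have rs' : r != s by apply/eqP => E; move: rs; rewrite E ltnn.
split.
  by move=> x /Pext_valid [_ H]; apply: H.
case: (unliftP r s) => [u Hu|E]; last by rewrite E eqxx in rs'.
pose g (i : 'I_4) : 'I_6 := lift r (lift u i).
have gi : injective g by move=> i j /lift_inj /lift_inj.
have gr i : g i != r by rewrite eq_sym neq_lift.
have gs i : g i != s by rewrite Hu (inj_eq (@lift_inj _ r)) eq_sym neq_lift.
have ptsP m c (h : 'I_m -> 'I_6) i : pts c h i = Pext_gen R (inl c) \/
   exists j, pts c h i = Pext_gen R (inr (h j)).
  rewrite /pts; case: (unlift ord0 i) => [j|]; [right; exists j|left] => //.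
exists 4%N; split.
  split.
    exists (pts ord0 (lift ord0)); split.
      by move=> i; case: (ptsP _ ord0 (lift ord0) i) => [->|[j ->]]; apply: gen_in_Pext.
    apply: pts_indep; first exact: lift_inj.
    by move=> i; rewrite eq_sym neq_lift.
  move=> p pP; apply: (@not_indep _ _ p (const_mx 1 : 'M[R]_(6,1))); last by rewrite rank_ones.
  move=> i; rewrite !sum_entries_mul.
  by by rewrite (proj1 (Pext_valid _ (pP i))) (proj1 (Pext_valid _ (pP ord0))).
split.
  exists (pts r g); split; last exact: pts_indep.
  move=> i; case: (ptsP _ r g i) => [->|[j ->]]; split; try apply: gen_in_Pext.
    by rewrite !gen_entry eqxx (negbTE rs') addr0.
  rewrite !gen_entry (negbTE (gr j)) (negbTE (gs j)) mulr0 subr0.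
  by field.
move=> p pP; apply: (@not_indep _ _ p (Bmat r s)); last by rewrite (@rank_Bmat _ _ (g ord0) rs' (gr ord0) (gs ord0)).
move=> i; rewrite !Bmat_mul.
have [/Pext_valid [-> _] ->] := pP i; have [/Pext_valid [-> _] ->] := pP ord0.
by [].
Qed.

End S.

Theorem proposition8p2 (R : realType) :
  (forall x : 'rV[R]_6,
     Pext x <->
     (dotv (2%:R *: rho R) x = 1 /\
      forall r s : 'I_6, (r < s)%N -> x 0 r + x 0 s <= 1)) /\
  (forall r s : 'I_6, (r < s)%N ->
     facet_defining (@Pext R) (fun x => x 0 r + x 0 s) 1).
Proof.
split; [exact: char_Pext | exact: facet].
Qed.
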